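(* Let $X$ be a complete CAT(0) space and $(T_n)_{n\in\mathbb{N}}$ a family of self-mappings of $X$, each satisfying property $(P_2)$, with $F:=\bigcap_{n\in\mathbb{N}} Fix(T_n)\neq\emptyset$. For $x\in X$ let $x_0:=x$ and $x_{n+1}:=T_nx_n$ for all $n\in\mathbb{N}$. Let $(\gamma_n)$ be a sequence of positive real numbers with $\sum_{n=0}^\infty\gamma_n^2=\infty$. Assume: (C1) for all $n,m\in\mathbb{N}$ and all $w\in X$, $d(T_nw,T_mw)\le \frac{|\gamma_n-\gamma_m|}{\gamma_n}d(w,T_nw)$; (C2) the sequence $\left(\frac{d(x_n,x_{n+1})}{\gamma_n}\right)_{n\in\mathbb{N}}$ is nonincreasing. Then $(x_n)$ $\Delta$-converges to a point of $F$.
   Context: A geodesic space $(X,d)$ is CAT(0) if for all $z\in X$, all geodesics $\gamma:[a,b]\to X$ and all $t\in[0,1]$, $d^2(z,\gamma((1-t)a+tb))\le(1-t)d^2(z,\gamma(a))+td^2(z,\gamma(b))-t(1-t)d^2(\gamma(a),\gamma(b))$. A mapping $T:X\to X$ satisfies property $(P_2)$ if for all $x,y\in X$, $2d^2(Tx,Ty)\le d^2(x,Ty)+d^2(y,Tx)-d^2(x,Tx)-d^2(y,Ty)$. $Fix(T)$ denotes the fixed point set. For a bounded sequence $(u_n)$, with $r(y,(u_n)):=\limsup_n d(y,u_n)$, an asymptotic center of $(u_n)$ is a point $c\in X$ minimizing $y\mapsto r(y,(u_n))$ over $X$. A bounded sequence $(x_n)$ $\Delta$-converges to $x$ if every subsequence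 of $(x_n)$ has $x$ as its unique asymptotic center. *)

(* Defs.v *)
From Stdlib Require Import Reals.
From Coquelicot Require Import Coquelicot.
Open Scope R_scope.

Definition is_metric {X : Type} (d : X -> X -> R) : Prop :=
  (forall x y, 0 <= d x y) /\
  (forall x y, d x y = 0 <-> x = y) /\
  (forall x y, d x y = d y x) /\
  (forall x y z, d x z <= d x y + d y z).

Definition is_geodesic {X : Type} (d : X -> X -> R) (a b : R) (g : R -> X) : Prop :=
  a <= b /\
  forall s t, a <= s <= b -> a <= t <= b -> d (g s) (g t) = Rabs (s - t).

Definition geodesic_space {X : Type} (d : X -> X -> R) : Prop :=
  forall x y : X, exists (a b : R) (g : R -> X),
    is_geodesic d a b g /\ g a = x /\ g b = y.

Definition CAT0 {X : Type} (d : X -> X -> R) : Prop :=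
  is_metric d /\ geodesic_space d /\
  forall (z : X) (a b : R) (g : R -> X) (t : R),
    is_geodesic d a b g -> 0 <= t <= 1 ->
    (d z (g ((1 - t) * a + t * b))) ^ 2 <=
      (1 - t) * (d z (g a)) ^ 2 + t * (d z (g b)) ^ 2
      - t * (1 - t) * (d (g a) (g b)) ^ 2.

Definition cauchy_seq {X : Type} (d : X -> X -> R) (u : nat -> X) : Prop :=
  forall eps, 0 < eps -> exists N, forall n m, (N <= n)%nat -> (N <= m)%nat ->
    d (u n) (u m) < eps.

Definition complete_metric {X : Type} (d : X -> X -> R) : Prop :=
  forall u : nat -> X, cauchy_seq d u ->
    exists l, forall eps, 0 < eps -> exists N, forall n, (N <= n)%nat -> d (u n) l < eps.

Definition property_P2 {X : Type} (d : X -> X -> R) (T : X -> X) : Prop :=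
  forall x y : X,
    2 * (d (T x) (T y)) ^ 2 <=
      (d x (T y)) ^ 2 + (d y (T x)) ^ 2 - (d x (T x)) ^ 2 - (d y (T y)) ^ 2.

Definition is_fixed {X : Type} (T : X -> X) (p : X) : Prop := T p = p.

Fixpoint iter_seq {X : Type} (T : nat -> X -> X) (x : X) (n : nat) : X :=
  match n with
  | O => x
  | S k => T k (iter_seq T x k)
  end.

Definition bounded_seq {X : Type} (d : X -> X -> R) (u : nat -> X) : Prop :=
  exists (p : X) (M : R), forall n, d p (u n) <= M.

Definition asym_radius {X : Type} (d : X -> X -> R) (y : X) (u : nat -> X) : Rbar :=
  LimSup_seq (fun n => d y (u n)).

Definition asymptotic_center {X : Type} (d : X -> X -> R) (u : nat -> X) (c : X) : Prop :=
  forall y : X, Rbar_le (asym_radius d c u) (asym_radius d y u).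

Definition unique_asymptotic_center {X : Type} (d : X -> X -> R) (u : nat -> X) (c : X) : Prop :=
  asymptotic_center d u c /\ forall c', asymptotic_center d u c' -> c' = c.

Definition Delta_converges {X : Type} (d : X -> X -> R) (u : nat -> X) (x : X) : Prop :=
  bounded_seq d u /\
  forall phi : nat -> nat, (forall n, (phi n < phi (S n))%nat) ->
    unique_asymptotic_center d (fun n => u (phi n)) x.

(* Main.v *)
Require Import Defs.
From Stdlib Require Import Reals Lra Lia Psatz ClassicalEpsilon Classical.
From Coquelicot Require Import Coquelicot.
Open Scope R_scope.

Lemma le_eps (a b K : R) :
  (forall eps, 0 < eps -> eps <= 1 -> a <= b + K * eps) -> a <= b.
Proof.
  intros H. destruct (Rle_dec a b) as [h|h]; auto. exfalso.
  assert (hab : 0 < a - b) by lra.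
  assert (hK : 0 < Rabs K + 1) by (pose proof (Rabs_pos K); lra).
  set (e := Rmin 1 ((a - b) / (2 * (Rabs K + 1)))).
  assert (he0 : 0 < e).
  { unfold e. apply Rmin_glb_lt; [lra|]. apply Rdiv_lt_0_compat; lra. }
  assert (he1 : e <= 1) by apply Rmin_l.
  assert (he2 : e <= (a - b) / (2 * (Rabs K + 1))) by apply Rmin_r.
  specialize (H e he0 he1).
  assert (h1 : K * e <= Rabs K * e).
  { apply Rmult_le_compat_r; [lra| apply Rle_abs]. }
  assert (h2 : (Rabs K + 1) * e <= (a - b) / 2).
  { apply Rmult_le_compat_l with (r := Rabs K + 1) in he2; [|lra].
    replace ((Rabs K + 1) * ((a - b) / (2 * (Rabs K + 1)))) with ((a-b)/2) in he2
      by (field; lra). exact he2. }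
  lra.
Qed.

Lemma ls_fin (u : nat -> R) (M : R) :
  (forall n, 0 <= u n) -> (forall n, u n <= M) ->
  LimSup_seq u = Finite (real (LimSup_seq u)) /\ is_LimSup_seq u (real (LimSup_seq u)).
Proof.
  intros H0 HM. destruct (ex_LimSup_seq u) as [l Hl].
  rewrite (is_LimSup_seq_unique _ _ Hl).
  destruct l as [l| |]; simpl in Hl.
  - simpl. split; auto.
  - destruct (Hl M 0%nat) as [n [_ Hn]]. specialize (HM n). lra.
  - destruct (Hl 0) as [N HN]. specialize (HN N (le_n _)). specialize (H0 N). lra.
Qed.

Definition rad {X : Type} (d : X -> X -> R) (v : nat -> X) (y : X) : R :=
  real (LimSup_seq (fun n => d y (v n))).

Lemma rad_spec {X : Type} (d : X -> X -> R) (v : nat -> X) (y : X) :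
  is_metric d -> bounded_seq d v ->
  LimSup_seq (fun n => d y (v n)) = Finite (rad d v y) /\ 0 <= rad d v y /\
  (forall eps, 0 < eps -> exists N, forall n, (N <= n)%nat -> d y (v n) < rad d v y + eps) /\
  (forall eps, 0 < eps -> forall N, exists n, (N <= n)%nat /\ rad d v y - eps < d y (v n)).
Proof.
  intros (Hpos & Heq & Hsym & Htri) (p & M & HM).
  destruct (ls_fin (fun n => d y (v n)) (d y p + M)) as [E1 E2].
  { intros; apply Hpos. }
  { intros n. specialize (Htri y p (v n)). specialize (HM n). lra. }
  unfold rad. rewrite E1. simpl. rewrite E1 in E2. simpl in E2.
  set (r := real (LimSup_seq (fun n : nat => d y (v n)))) in *.
  assert (Hev : forall eps, 0 < eps -> exists N, forall n, (N <= n)%nat -> d y (v n) < r + eps).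
  { intros eps He. exact (proj2 (E2 (mkposreal eps He))). }
  assert (Hfr : forall eps, 0 < eps -> forall N, exists n, (N <= n)%nat /\ r - eps < d y (v n)).
  { intros eps He. exact (proj1 (E2 (mkposreal eps He))). }
  split; [reflexivity|]. split; [|split; assumption].
  destruct (Rle_dec 0 r) as [h|h]; auto.
  destruct (Hev (- r / 2)) as [N HN]; [lra|].
  specialize (HN N (le_n _)). specialize (Hpos y (v N)). lra.
Qed.

Lemma midpoint {X : Type} (d : X -> X -> R) (y1 y2 : X) :
  CAT0 d -> exists m, forall z,
    d z m ^ 2 <= /2 * d z y1 ^ 2 + /2 * d z y2 ^ 2 - /4 * d y1 y2 ^ 2.
Proof.
  intros (Hm & Hg & Hi).
  destruct (Hg y1 y2) as (a & b & g & Hgeo & Ha & Hb).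
  exists (g ((1 - /2) * a + /2 * b)). intros z.
  assert (H := Hi z a b g (/2) Hgeo ltac:(lra)).
  rewrite Ha, Hb in H. lra.
Qed.

Lemma ev2 (P Q : nat -> Prop) :
  (exists N, forall n, (N <= n)%nat -> P n) -> (exists N, forall n, (N <= n)%nat -> Q n) ->
  exists N, forall n, (N <= n)%nat -> P n /\ Q n.
Proof.
  intros [N1 H1] [N2 H2]. exists (max N1 N2). intros n Hn. split.
  apply H1; lia. apply H2; lia.
Qed.

Lemma sq_le (a b : R) : 0 <= a -> a <= b -> a ^ 2 <= b ^ 2.
Proof. intros; nra. Qed.

Lemma rad_lip {X : Type} (d : X -> X -> R) (v : nat -> X) (y z : X) :
  is_metric d -> bounded_seq d v -> rad d v y <= rad d v z + d y z.
Proof.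
  intros Hm Hb.
  destruct (rad_spec d v y Hm Hb) as (_ & _ & _ & Fy).
  destruct (rad_spec d v z Hm Hb) as (_ & _ & Ez & _).
  destruct Hm as (Hpos & Heq & Hsym & Htri).
  apply le_eps with (K := 2). intros eps He _.
  destruct (Ez eps He) as [N HN]. destruct (Fy eps He N) as [n [Hn H1]].
  specialize (HN n Hn). specialize (Htri y z (v n)). lra.
Qed.

Lemma rad_mid {X : Type} (d : X -> X -> R) (v : nat -> X) (y1 y2 : X) :
  CAT0 d -> bounded_seq d v -> exists m,
    rad d v m ^ 2 <= /2 * rad d v y1 ^ 2 + /2 * rad d v y2 ^ 2 - /4 * d y1 y2 ^ 2.
Proof.
  intros Hc Hb. destruct (midpoint d y1 y2 Hc) as [m Hmid].
  assert (Hm : is_metric d) by apply Hc.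
  exists m.
  destruct (rad_spec d v m Hm Hb) as (_ & Pm & _ & Fm).
  destruct (rad_spec d v y1 Hm Hb) as (_ & P1 & E1 & _).
  destruct (rad_spec d v y2 Hm Hb) as (_ & P2 & E2 & _).
  destruct Hm as (Hpos & Heq & Hsym & Htri).
  set (r := rad d v m) in *. set (r1 := rad d v y1) in *. set (r2 := rad d v y2) in *.
  apply le_eps with (K := r1 + r2 + 2 * r + 1). intros eps He He1.
  destruct (ev2 _ _ (E1 eps He) (E2 eps He)) as [N HN].
  destruct (Fm eps He N) as [n [Hn Hf]]. destruct (HN n Hn) as [h1 h2].
  specialize (Hmid (v n)). rewrite (Hsym (v n) m), (Hsym (v n) y1), (Hsym (v n) y2) in Hmid.
  set (w := d m (v n)) in *. set (w1 := d y1 (v n)) in *. set (w2 := d y2 (v n)) in *.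
  assert (0 <= w) by apply Hpos. assert (0 <= w1) by apply Hpos. assert (0 <= w2) by apply Hpos.
  assert (q1 : w1 ^ 2 <= (r1 + eps) ^ 2) by (apply sq_le; lra).
  assert (q2 : w2 ^ 2 <= (r2 + eps) ^ 2) by (apply sq_le; lra).
  assert (q : r ^ 2 <= w ^ 2 + 2 * eps * r).
  { destruct (Rle_dec eps r). assert ((r - eps) ^ 2 <= w ^ 2) by (apply sq_le; lra). nra. nra. }
  nra.
Qed.

Lemma center_unique {X : Type} (d : X -> X -> R) (v : nat -> X) (c c' : X) :
  CAT0 d -> bounded_seq d v ->
  (forall y, rad d v c <= rad d v y) -> (forall y, rad d v c' <= rad d v y) -> c' = c.
Proof.
  intros Hc Hb H1 H2.
  assert (Hm : is_metric d) by apply Hc.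
  destruct (rad_mid d v c c' Hc Hb) as [m Hmid].
  destruct (rad_spec d v c Hm Hb) as (_ & P1 & _).
  assert (e1 := H1 c'). assert (e2 := H2 c). assert (e3 := H1 m).
  assert (e4 := sq_le _ _ P1 e3).
  assert (h : d c c' ^ 2 <= 0) by nra.
  destruct Hm as (Hpos & Heq & Hsym & Htri).
  assert (d c c' = 0) by (specialize (Hpos c c'); nra).
  symmetry. apply Heq. auto.
Qed.

Lemma center_exists {X : Type} (d : X -> X -> R) (v : nat -> X) :
  CAT0 d -> complete_metric d -> bounded_seq d v ->
  exists c, forall y, rad d v c <= rad d v y.
Proof.
  intros Hc Hcomp Hb.
  assert (Hm : is_metric d) by apply Hc.
  set (E := fun r => exists y, r = - rad d v y).
  destruct (completeness E) as [m [Hub Hlub]].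
  { exists 0. intros r [y ->]. destruct (rad_spec d v y Hm Hb) as (_ & P & _). lra. }
  { exists (- rad d v (v 0%nat)). exists (v 0%nat). auto. }
  set (r0 := - m).
  assert (Hlow : forall y, r0 <= rad d v y).
  { intros y. assert (Hy := Hub (- rad d v y) (ex_intro _ y eq_refl)). unfold r0; lra. }
  assert (Hr0 : 0 <= r0).
  { apply Rnot_lt_le. intros hlt.
    assert (m <= 0).
    { apply Hlub. intros r [y ->]. destruct (rad_spec d v y Hm Hb) as (_ & P & _). lra. }
    unfold r0 in hlt; lra. }
  assert (Happ : forall eps, 0 < eps -> exists y, rad d v y < r0 + eps).
  { intros eps He. apply NNPP. intros Hn.
    assert (m <= m - eps); [|lra].
    apply Hlub. intros r [y ->].
    assert (~ rad d v y < r0 + eps) by (intro; apply Hn; exists y; auto).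
    unfold r0 in *; lra. }
  assert (Happ2 : forall k : nat, exists y, rad d v y ^ 2 < r0 ^ 2 + / (INR k + 1)).
  { intros k. assert (hk : 0 < / (INR k + 1)).
    { apply Rinv_0_lt_compat. pose proof (pos_INR k). lra. }
    set (s := sqrt (r0 ^ 2 + / (INR k + 1))).
    assert (hs : r0 < s).
    { unfold s. rewrite <- (sqrt_pow2 r0) at 1 by lra. apply sqrt_lt_1; nra. }
    destruct (Happ (s - r0)) as [y Hy]; [lra|]. exists y.
    destruct (rad_spec d v y Hm Hb) as (_ & P & _).
    assert (rad d v y ^ 2 < s ^ 2) by nra.
    unfold s in *. rewrite pow2_sqrt in H by nra. lra. }
  set (yk := fun k => proj1_sig (constructive_indefinite_description _ (Happ2 k))).
  assert (Hyk : forall k, rad d v (yk k) ^ 2 < r0 ^ 2 + / (INR k + 1)).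
  { intros k. unfold yk. destruct (constructive_indefinite_description _ (Happ2 k)). simpl. auto. }
  assert (Hsmall : forall e, 0 < e -> exists N, forall k, (N <= k)%nat -> / (INR k + 1) < e).
  { intros e He. destruct (archimed_cor1 e He) as [N [HN HN0]]. exists N. intros k Hk.
    apply Rle_lt_trans with (/ INR N); [|auto].
    apply Rinv_le_contravar. apply lt_0_INR; lia. apply le_INR in Hk. lra. }
  assert (Hcau : cauchy_seq d yk).
  { intros eps He. destruct (Hsmall (eps ^ 2 / 4)) as [N HN]; [nra|].
    exists N. intros j k Hj Hk.
    destruct (rad_mid d v (yk j) (yk k) Hc Hb) as [mm Hmm].
    assert (h1 := Hyk j). assert (h2 := Hyk k). assert (h3 := HN j Hj). assert (h4 := HN k Hk).
    assert (h5 := sq_le _ _ Hr0 (Hlow mm)).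
    assert (d (yk j) (yk k) ^ 2 < eps ^ 2) by nra.
    destruct Hm as (Hpos & _). specialize (Hpos (yk j) (yk k)). nra. }
  destruct (Hcomp yk Hcau) as [l Hl].
  exists l. intros y. apply Rle_trans with r0; [|apply Hlow].
  apply le_eps with (K := 1). intros eps He _.
  destruct (Hsmall (eps ^ 2 / 4)) as [N1 HN1]; [nra|].
  destruct (Hl (eps / 2)) as [N2 HN2]; [lra|].
  set (k := max N1 N2).
  assert (h1 := HN1 k ltac:(lia)). assert (h2 := HN2 k ltac:(lia)). assert (h3 := Hyk k).
  assert (h4 := rad_lip d v l (yk k) Hm Hb).
  destruct (rad_spec d v (yk k) Hm Hb) as (_ & P & _).
  destruct Hm as (Hpos & Heq & Hsym & Htri). rewrite (Hsym l) in h4.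
  assert (rad d v (yk k) < r0 + eps / 2) by nra.
  lra.
Qed.

Lemma center_fixed {X : Type} (d : X -> X -> R) (v : nat -> X) (Tm : X -> X) (c : X) :
  CAT0 d -> bounded_seq d v -> property_P2 d Tm ->
  (forall eps, 0 < eps -> exists N, forall n, (N <= n)%nat -> d (v n) (Tm (v n)) < eps) ->
  (forall y, rad d v c <= rad d v y) -> Tm c = c.
Proof.
  intros Hc Hb HP Hreg Hcen.
  assert (Hm : is_metric d) by apply Hc.
  destruct (rad_spec d v c Hm Hb) as (_ & Pc & Ec & _).
  destruct (rad_spec d v (Tm c) Hm Hb) as (_ & _ & _ & Ft).
  assert (HRR := Hcen (Tm c)).
  destruct Hm as (Hpos & Heq & Hsym & Htri).
  set (R0 := rad d v c) in *. set (R1 := rad d v (Tm c)) in *.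
  set (D := d c (Tm c)).
  assert (HD : 0 <= D) by apply Hpos.
  assert (HD2 : D ^ 2 <= 0).
  { apply le_eps with (K := 10 * R0 + 4 * D + 10). intros eps He He1.
    destruct (ev2 _ _ (Hreg eps He) (Ec eps He)) as [N HN].
    destruct (Ft eps He N) as [n [Hn Hf]]. destruct (HN n Hn) as [h1 h2].
    assert (HPn := HP (v n) c).
    rewrite (Hsym (v n) (Tm c)) in HPn.
    set (a := d (Tm (v n)) (Tm c)) in *.
    set (b := d (Tm c) (v n)) in *.
    set (e := d (v n) (Tm (v n))) in *.
    set (f := d c (Tm (v n))) in *.
    fold D in HPn.
    assert (0 <= a) by apply Hpos. assert (0 <= b) by apply Hpos.
    assert (0 <= e) by apply Hpos. assert (0 <= f) by apply Hpos.
    assert (hf : f < R0 + 2 * eps).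
    { assert (t := Htri c (v n) (Tm (v n))). unfold f, e in *. lra. }
    assert (hf2 : f ^ 2 <= (R0 + 2 * eps) ^ 2) by (apply sq_le; lra).
    assert (hb1 : b <= a + e).
    { assert (t := Htri (Tm c) (Tm (v n)) (v n)). rewrite (Hsym (Tm c) (Tm (v n))) in t.
      rewrite (Hsym (Tm (v n)) (v n)) in t. unfold a, b, e in *. lra. }
    assert (hb2 : b < D + R0 + eps).
    { assert (t := Htri (Tm c) c (v n)). rewrite (Hsym (Tm c) c) in t. unfold b, D in *. lra. }
    assert (hb3 : R0 ^ 2 <= b ^ 2 + 2 * eps * R0).
    { destruct (Rle_dec eps R0). assert ((R0 - eps) ^ 2 <= b ^ 2) by (apply sq_le; lra). nra. nra. }
    assert (hab : b ^ 2 - 2 * a ^ 2 <= - b ^ 2 + 4 * b * e + 2 * e ^ 2).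
    { destruct (Rle_dec e b).
      - assert ((b - e) ^ 2 <= a ^ 2) by (apply sq_le; lra).
        assert (b * e >= 0) by (apply Rle_ge, Rmult_le_pos; lra). nra.
      - assert (b ^ 2 <= e ^ 2) by (apply sq_le; lra).
        assert (a ^ 2 >= 0) by nra. assert (b * e >= 0) by (apply Rle_ge, Rmult_le_pos; lra). lra. }
    assert (k1 : D ^ 2 <= f ^ 2 + b ^ 2 - 2 * a ^ 2).
    { assert (e ^ 2 >= 0) by nra. lra. }
    assert (k2 : 4 * b * e <= 4 * (D + R0 + 1) * eps).
    { assert (b * e <= (D + R0 + 1) * eps).
      { apply Rmult_le_compat; lra. }
      lra. }
    assert (k3 : e ^ 2 <= eps) by (assert (e * e <= eps * 1) by (apply Rmult_le_compat; lra); simpl; lra).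
    assert (k4 : eps ^ 2 <= eps) by (assert (eps * eps <= eps * 1) by (apply Rmult_le_compat; lra); simpl; lra).
    assert (k5 : (R0 + 2 * eps) ^ 2 = R0 ^ 2 + 4 * (eps * R0) + 4 * eps ^ 2) by ring.
    assert (k6 : (10 * R0 + 4 * D + 10) * eps = 10 * (eps * R0) + 4 * (D * eps) + 10 * eps) by ring.
    assert (k7 : 4 * (D + R0 + 1) * eps = 4 * (D * eps) + 4 * (eps * R0) + 4 * eps) by ring.
    assert (k8 : 2 * eps * R0 = 2 * (eps * R0)) by ring.
    lra. }
  assert (D = 0) by (apply Rle_antisym; [|lra]; apply Rnot_lt_le; intro; assert (0 < D ^ 2) by (apply pow_lt; lra); lra). symmetry. apply Heq. exact H.
Qed.

Lemma sum_mono (f : nat -> R) (N n : nat) :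
  (forall k, 0 <= f k) -> (N <= n)%nat -> sum_f_R0 f N <= sum_f_R0 f n.
Proof.
  intros Hf Hn. induction Hn; [lra|]. simpl. specialize (Hf (S m)). lra.
Qed.

Lemma sum_ge (f : nat -> R) (N n : nat) :
  (forall k, 0 <= f k) -> (N < n)%nat -> sum_f_R0 f N + f n <= sum_f_R0 f n.
Proof.
  intros Hf Hn. destruct n as [|n]; [lia|]. simpl.
  assert (sum_f_R0 f N <= sum_f_R0 f n) by (apply sum_mono; auto; lia). lra.
Qed.

Lemma sum_mul_c (f : nat -> R) (c : R) (n : nat) :
  sum_f_R0 (fun k => f k * c) n = sum_f_R0 f n * c.
Proof. induction n; simpl; [ring| rewrite IHn; ring]. Qed.

Lemma terms_to_0 (f : nat -> R) (B : R) :
  (forall k, 0 <= f k) -> (forall N, sum_f_R0 f N <= B) ->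
  forall eps, 0 < eps -> exists N, forall n, (N <= n)%nat -> f n < eps.
Proof.
  intros Hf HB eps He. apply NNPP. intros Hn.
  assert (Hfr : forall N, exists n, (N <= n)%nat /\ eps <= f n).
  { intros N. apply NNPP. intros H2. apply Hn. exists N. intros n Hn'.
    apply Rnot_le_lt. intros H3. apply H2. exists n. auto. }
  assert (Hk : forall K : nat, exists N, INR K * eps <= sum_f_R0 f N).
  { induction K as [|K [N HN]].
    - exists 0%nat. simpl. specialize (Hf 0%nat). lra.
    - destruct (Hfr (S N)) as [n [Hn1 Hn2]]. exists n.
      assert (sum_f_R0 f N + f n <= sum_f_R0 f n) by (apply sum_ge; auto; lia).
      rewrite S_INR. lra. }
  assert (HB0 : 0 <= B) by (specialize (HB 0%nat); specialize (Hf 0%nat); simpl in HB; lra).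
  destruct (archimed_cor1 (eps / (B + 1))) as [K [HK HK0]].
  { apply Rdiv_lt_0_compat; lra. }
  destruct (Hk K) as [N HN]. specialize (HB N).
  assert (hK : 0 < INR K) by (apply lt_0_INR; lia).
  assert (B + 1 < INR K * eps).
  { apply Rmult_lt_compat_l with (r := INR K) in HK; [|lra].
    rewrite Rinv_r in HK by lra.
    replace (INR K * (eps / (B + 1))) with (INR K * eps / (B + 1)) in HK by (field; lra).
    apply Rmult_lt_compat_r with (r := B + 1) in HK; [|lra].
    replace (INR K * eps / (B + 1) * (B + 1)) with (INR K * eps) in HK by (field; lra). lra. }
  lra.
Qed.

Lemma fejer {X : Type} (d : X -> X -> R) (T : nat -> X -> X) (x q : X) (n : nat) :
  is_metric d -> property_P2 d (T n) -> T n q = q ->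
  d (iter_seq T x (S n)) q ^ 2 <=
    d (iter_seq T x n) q ^ 2 - d (iter_seq T x n) (iter_seq T x (S n)) ^ 2.
Proof.
  intros (Hpos & Heq & Hsym & Htri) HP Hq. simpl.
  assert (H := HP (iter_seq T x n) q). rewrite Hq in H.
  assert (d q q = 0) by (apply Heq; auto). rewrite H0 in H.
  rewrite (Hsym q) in H. lra.
Qed.

Lemma fejer_mono {X : Type} (d : X -> X -> R) (T : nat -> X -> X) (x q : X) :
  is_metric d -> (forall n, property_P2 d (T n)) -> (forall n, T n q = q) ->
  forall n m, (n <= m)%nat -> d q (iter_seq T x m) <= d q (iter_seq T x n).
Proof.
  intros Hm HP Hq n m Hnm. induction Hnm; [lra|].
  assert (H := fejer d T x q m Hm (HP m) (Hq m)).
  destruct Hm as (Hpos & Heq & Hsym & Htri).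
  rewrite !(Hsym _ q) in H.
  assert (d q (iter_seq T x (S m)) <= d q (iter_seq T x m)).
  { apply Rnot_lt_le. intros hl.
    assert (d q (iter_seq T x m) ^ 2 < d q (iter_seq T x (S m)) ^ 2).
    { assert (0 <= d q (iter_seq T x m)) by apply Hpos. nra. }
    assert (0 <= d (iter_seq T x m) (iter_seq T x (S m)) ^ 2) by (apply pow2_ge_0). lra. }
  lra.
Qed.

Lemma fejer_sum {X : Type} (d : X -> X -> R) (T : nat -> X -> X) (x q : X) :
  is_metric d -> (forall n, property_P2 d (T n)) -> (forall n, T n q = q) ->
  forall N, sum_f_R0 (fun k => d (iter_seq T x k) (iter_seq T x (S k)) ^ 2) N <=
    d (iter_seq T x 0) q ^ 2 - d (iter_seq T x (S N)) q ^ 2.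
Proof.
  intros Hm HP Hq N. induction N.
  - assert (H := fejer d T x q 0 Hm (HP 0%nat) (Hq 0%nat)). simpl in H |- *. lra.
  - rewrite tech5. assert (H := fejer d T x q (S N) Hm (HP (S N)) (Hq (S N))). lra.
Qed.

Lemma s_to_0 (dn gam : nat -> R) (B : R) :
  (forall k, 0 <= dn k) -> (forall k, 0 < gam k) ->
  (forall M : R, exists N : nat, M < sum_f_R0 (fun k => (gam k) ^ 2) N) ->
  (forall n, dn (S n) / gam (S n) <= dn n / gam n) ->
  (forall N, sum_f_R0 (fun k => dn k ^ 2) N <= B) ->
  forall eps, 0 < eps -> exists N, forall n, (N <= n)%nat -> dn n / gam n < eps.
Proof.
  intros Hd Hg Hsum HC2 HB eps He.
  set (s := fun n => dn n / gam n).
  assert (Hs0 : forall n, 0 <= s n).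
  { intros n. unfold s. apply Rdiv_le_0_compat; auto. }
  assert (Hsm : forall k n, (k <= n)%nat -> s n <= s k).
  { intros k n Hkn. induction Hkn; [lra|]. specialize (HC2 m). fold (s m) (s (S m)) in HC2. lra. }
  assert (Hk : forall n k, (k <= n)%nat -> gam k ^ 2 * s n ^ 2 <= dn k ^ 2).
  { intros n k Hkn. assert (E : dn k = gam k * s k) by (unfold s; field; specialize (Hg k); lra).
    rewrite E. assert (h := sq_le _ _ (Hs0 n) (Hsm k n Hkn)).
    assert (0 <= gam k ^ 2) by apply pow2_ge_0.
    replace ((gam k * s k) ^ 2) with (gam k ^ 2 * s k ^ 2) by ring.
    apply Rmult_le_compat_l; auto. }
  assert (HG : forall n, sum_f_R0 (fun k => gam k ^ 2) n * s n ^ 2 <= B).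
  { intros n. rewrite <- sum_mul_c. apply Rle_trans with (sum_f_R0 (fun k => dn k ^ 2) n); auto.
    apply sum_Rle. intros k Hkn. apply Hk. auto. }
  assert (HB0 : 0 <= B) by (specialize (HB 0%nat); simpl in HB; specialize (Hd 0%nat); nra).
  destruct (Hsum (B / eps ^ 2)) as [N HN]. exists N. intros n Hn.
  assert (Hmon : sum_f_R0 (fun k => gam k ^ 2) N <= sum_f_R0 (fun k => gam k ^ 2) n).
  { apply sum_mono; auto. intros k; apply pow2_ge_0. }
  set (G := sum_f_R0 (fun k => gam k ^ 2) n) in *.
  assert (he2 : 0 < eps ^ 2) by (apply pow_lt; auto).
  assert (HBe : B < G * eps ^ 2).
  { assert (B / eps ^ 2 < G) by lra.
    apply Rmult_lt_compat_r with (r := eps ^ 2) in H; auto.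
    replace (B / eps ^ 2 * eps ^ 2) with B in H by (field; lra). lra. }
  assert (HGp : 0 < G).
  { assert (0 <= B / eps ^ 2) by (apply Rdiv_le_0_compat; lra). lra. }
  fold (s n). specialize (HG n). fold G in HG.
  assert (s n ^ 2 < eps ^ 2).
  { apply Rmult_lt_reg_l with G; auto. lra. }
  assert (0 <= s n) by auto. nra.
Qed.

Lemma regular {X : Type} (d : X -> X -> R) (T : nat -> X -> X) (gamma : nat -> R) (x q : X) :
  is_metric d -> (forall n, property_P2 d (T n)) -> (forall n, T n q = q) ->
  (forall n, 0 < gamma n) ->
  (forall M : R, exists N : nat, M < sum_f_R0 (fun k => (gamma k) ^ 2) N) ->
  (forall (n m : nat) (w : X),
      d (T n w) (T m w) <= Rabs (gamma n - gamma m) / gamma n * d w (T n w)) ->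
  (forall n : nat,
      d (iter_seq T x (S n)) (iter_seq T x (S (S n))) / gamma (S n) <=
      d (iter_seq T x n) (iter_seq T x (S n)) / gamma n) ->
  forall m eps, 0 < eps -> exists N, forall n, (N <= n)%nat ->
    d (iter_seq T x n) (T m (iter_seq T x n)) < eps.
Proof.
  intros Hm HP Hq Hg Hsum HC1 HC2 m eps He.
  set (dn := fun k => d (iter_seq T x k) (iter_seq T x (S k))).
  set (B := d (iter_seq T x 0) q ^ 2).
  assert (Hpos := proj1 Hm).
  assert (HB : forall N, sum_f_R0 (fun k => dn k ^ 2) N <= B).
  { intros N. assert (h := fejer_sum d T x q Hm HP Hq N).
    assert (0 <= d (iter_seq T x (S N)) q ^ 2) by apply pow2_ge_0. unfold dn, B. lra. }
  assert (Hdn0 : forall k, 0 <= dn k) by (intros; apply Hpos).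
  destruct (terms_to_0 (fun k => dn k ^ 2) B ltac:(intros; apply pow2_ge_0) HB ((eps/4)^2))
    as [N1 HN1].
  { apply pow_lt; lra. }
  destruct (s_to_0 dn gamma B Hdn0 Hg Hsum HC2 HB (eps / (4 * gamma m))) as [N2 HN2].
  { apply Rdiv_lt_0_compat; [lra|]. specialize (Hg m). lra. }
  exists (max N1 N2). intros n Hn.
  specialize (HN1 n ltac:(lia)). specialize (HN2 n ltac:(lia)). simpl in HN1.
  assert (hd : dn n < eps / 4).
  { specialize (Hdn0 n). nra. }
  assert (h1 := HC1 n m (iter_seq T x n)).
  destruct Hm as (_ & _ & Hsym & Htri).
  assert (h2 := Htri (iter_seq T x n) (T n (iter_seq T x n)) (T m (iter_seq T x n))).
  change (T n (iter_seq T x n)) with (iter_seq T x (S n)) in h1, h2.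
  fold (dn n) in h1, h2.
  assert (hgn := Hg n). assert (hgm := Hg m).
  assert (E : Rabs (gamma n - gamma m) / gamma n * dn n = Rabs (gamma n - gamma m) * (dn n / gamma n))
    by (field; lra).
  assert (hab : Rabs (gamma n - gamma m) <= gamma n + gamma m).
  { unfold Rabs; destruct (Rcase_abs (gamma n - gamma m)); lra. }
  assert (hs0 : 0 <= dn n / gamma n) by (apply Rdiv_le_0_compat; auto).
  assert (h3 : Rabs (gamma n - gamma m) * (dn n / gamma n) <= (gamma n + gamma m) * (dn n / gamma n))
    by (apply Rmult_le_compat_r; auto).
  assert (E2 : (gamma n + gamma m) * (dn n / gamma n) = dn n + gamma m * (dn n / gamma n))
    by (field; lra).
  assert (h4 : gamma m * (dn n / gamma n) < eps / 4).
  { apply Rmult_lt_compat_l with (r := gamma m) in HN2; auto.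
    replace (gamma m * (eps / (4 * gamma m))) with (eps / 4) in HN2 by (field; lra). lra. }
  lra.
Qed.

Lemma strict_ge (phi : nat -> nat) : (forall n, (phi n < phi (S n))%nat) -> forall n, (n <= phi n)%nat.
Proof. intros H n. induction n; [lia|]. specialize (H n). lia. Qed.

Lemma radF {X : Type} (d : X -> X -> R) (T : nat -> X -> X) (x p : X) (phi : nat -> nat) :
  is_metric d -> (forall n, property_P2 d (T n)) -> (forall n, T n p = p) ->
  bounded_seq d (iter_seq T x) -> bounded_seq d (fun n => iter_seq T x (phi n)) ->
  (forall n, (phi n < phi (S n))%nat) ->
  rad d (fun n => iter_seq T x (phi n)) p = rad d (iter_seq T x) p.
Proof.
  intros Hm HP Hp Hb Hbv Hphi.
  destruct (rad_spec d (iter_seq T x) p Hm Hb) as (_ & _ & Ev & Fr).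
  set (l := rad d (iter_seq T x) p) in *.
  assert (Hls : is_LimSup_seq (fun n => d p (iter_seq T x (phi n))) (Finite l)).
  { simpl. intros [eps He]. simpl. split.
    - intros N. exists N. split; [lia|].
      destruct (Fr eps He (phi N)) as [k [Hk Hk2]].
      assert (d p (iter_seq T x k) <= d p (iter_seq T x (phi N))) by (apply (fejer_mono d T x p); auto).
      lra.
    - destruct (Ev eps He) as [N HN]. exists N. intros n Hn. apply HN.
      assert (h := strict_ge phi Hphi n). lia. }
  unfold rad at 1. rewrite (is_LimSup_seq_unique _ _ Hls). reflexivity.
Qed.

Theorem theorem3p5 (X : Type) (d : X -> X -> R) (T : nat -> X -> X)
  (gamma : nat -> R) (x : X) :
  CAT0 d ->
  complete_metric d ->
  (forall n, property_P2 d (T n)) ->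
  (exists p : X, forall n, is_fixed (T n) p) ->
  (forall n, 0 < gamma n) ->
  (forall M : R, exists N : nat, M < sum_f_R0 (fun k => (gamma k) ^ 2) N) ->
  (forall (n m : nat) (w : X),
      d (T n w) (T m w) <= Rabs (gamma n - gamma m) / gamma n * d w (T n w)) ->
  (forall n : nat,
      d (iter_seq T x (S n)) (iter_seq T x (S (S n))) / gamma (S n) <=
      d (iter_seq T x n) (iter_seq T x (S n)) / gamma n) ->
  exists p : X, (forall n, is_fixed (T n) p) /\ Delta_converges d (iter_seq T x) p.
Proof.
  intros Hc Hcomp HP [q Hq] Hg Hsum HC1 HC2.
  unfold is_fixed in Hq.
  assert (Hm : is_metric d) by apply Hc.
  assert (Hbv : forall phi : nat -> nat, bounded_seq d (fun n => iter_seq T x (phi n))).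
  { intros phi. exists q, (d q (iter_seq T x 0)). intros n.
    apply (fejer_mono d T x q Hm HP Hq). lia. }
  assert (Hbx : bounded_seq d (iter_seq T x)).
  { exists q, (d q (iter_seq T x 0)). intros n.
    apply (fejer_mono d T x q Hm HP Hq). lia. }
  assert (Hreg := regular d T gamma x q Hm HP Hq Hg Hsum HC1 HC2).
  destruct (center_exists d (iter_seq T x) Hc Hcomp Hbx) as [c Hc0].
  assert (HcF : forall m, T m c = c).
  { intros m. exact (center_fixed d (iter_seq T x) (T m) c Hc Hbx (HP m) (Hreg m) Hc0). }
  exists c. split; [exact HcF|]. split; [exact Hbx|].
  intros phi Hphi.
  set (v := fun n => iter_seq T x (phi n)).
  assert (Hregv : forall m eps, 0 < eps -> exists N, forall n, (N <= n)%nat -> d (v n) (T m (v n)) < eps).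
  { intros m eps He. destruct (Hreg m eps He) as [N HN]. exists N. intros n Hn.
    apply HN. assert (h := strict_ge phi Hphi n). lia. }
  destruct (center_exists d v Hc Hcomp (Hbv phi)) as [cv Hcv].
  assert (HcvF : forall m, T m cv = cv).
  { intros m. exact (center_fixed d v (T m) cv Hc (Hbv phi) (HP m) (Hregv m) Hcv). }
  assert (Hcen : forall y, rad d v c <= rad d v y).
  { destruct (Rle_dec (rad d v c) (rad d v cv)) as [h|h].
    - intros y. specialize (Hcv y). lra.
    - exfalso. unfold v in h.
      rewrite (radF d T x c phi Hm HP HcF Hbx (Hbv phi) Hphi) in h.
      rewrite (radF d T x cv phi Hm HP HcvF Hbx (Hbv phi) Hphi) in h.
      specialize (Hc0 cv). lra. }
  assert (Erad : forall y, LimSup_seq (fun n => d y (iter_seq T x (phi n))) = Finite (rad d v y)).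
  { intros y. apply (rad_spec d v y Hm (Hbv phi)). }
  split.
  - unfold asymptotic_center, asym_radius. intros y. rewrite !Erad. simpl. apply Hcen.
  - intros c' Hc'. unfold asymptotic_center, asym_radius in Hc'.
    apply (center_unique d v c c' Hc (Hbv phi) Hcen).
    intros y. specialize (Hc' y). rewrite !Erad in Hc'. simpl in Hc'. exact Hc'.
Qed.
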